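(* Let $n\ge2$ and $0\le k<n$. The number of ASM-recurrent configurations $c$ on the fan graph $F_n$ with $\mathrm{level}(c)=k$ is $$\sum_{r=0}^{n-k-1}\binom{n-k-1}{r}\binom{r+k}{r}.$$
   Context: $F_n$: path on $[n]$ (edges $\{i,i+1\}$) plus a sink $0$ adjacent to all of $[n]$. Sandpile setting: configurations $c\in\mathbb{Z}_{\ge0}^n$, stable iff $c_i<\deg(i)$ (on $F_n$: $c\in\{0,1,2\}^n$, $c_1,c_n\le1$). ASM: an unstable vertex loses $\deg(i)$ grains and sends one to each neighbour (grains to the sink vanish); Markov chain adds a grain at a random vertex (fully supported distribution) and stabilises; ASM-recurrent = recurrent state. Known: stable $c$ on $F_n$ is ASM-recurrent iff for all $i<j$ with $c_i=c_j=0$ some $i<k<j$ has $c_k=2$. $\mathrm{level}(c)=\sum_i c_i-(n-1)$. *)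

(* Defs.v *)
From Stdlib Require Import Relations.
From mathcomp Require Import all_boot all_order all_algebra.
Set Implicit Arguments. Unset Strict Implicit. Unset Printing Implicit Defensive.

(* Fan graph F_n: non-sink vertices 1..n are encoded as i : 'I_n (vertex i+1);
   path edges {i,i+1}; every non-sink vertex is also adjacent to the sink 0. *)

Definition config (n : nat) := {ffun 'I_n -> nat}.

Definition fan_adj (n : nat) (i j : 'I_n) : bool :=
  (i.+1 == j :> nat) || (j.+1 == i :> nat).

Definition fan_deg (n : nat) (i : 'I_n) : nat :=
  1 + #|[pred j : 'I_n | fan_adj i j]|.

Definition stable (n : nat) (c : config n) : Prop :=
  forall i : 'I_n, c i < fan_deg i.

Definition topple_step (n : nat) (c c' : config n) : Prop :=
  exists i : 'I_n, fan_deg i <= c i /\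
    c' = [ffun j => if j == i then c j - fan_deg i else c j + fan_adj i j].

Definition stabilizes (n : nat) (a b : config n) : Prop :=
  clos_refl_trans (config n) (@topple_step n) a b /\ stable b.

Definition add_grain (n : nat) (c : config n) (i : 'I_n) : config n :=
  [ffun j => c j + (j == i)].

(* support of the ASM Markov chain (distribution fully supported) *)
Definition asm_step (n : nat) (c c' : config n) : Prop :=
  stable c /\ exists i : 'I_n, stabilizes (add_grain c i) c'.

Definition asm_reach (n : nat) := clos_refl_trans (config n) (@asm_step n).

(* recurrent state of the finite Markov chain on stable configurations *)
Definition asm_recurrent (n : nat) (c : config n) : Prop :=
  stable c /\ forall c', asm_reach c c' -> asm_reach c' c.

Definition level (n : nat) (c : config n) : int :=
  ((\sum_(i < n) c i)%:Z - (n.-1)%:Z)%R.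

Definition to_config (n : nat) (c : {ffun 'I_n -> 'I_3}) : config n :=
  [ffun i => nat_of_ord (c i)].

(* Main.v *)
Require Import Defs.
From Stdlib Require Import Relations.
From mathcomp Require Import all_boot all_order all_algebra.
From mathcomp Require Import zify.
Set Implicit Arguments. Unset Strict Implicit. Unset Printing Implicit Defensive.

Section Sandpile.
Variable n : nat.
Implicit Types (a b c d x : config n) (i j : 'I_n).

Definition topple c i : config n :=
  [ffun j => if j == i then c j - fan_deg i else c j + fan_adj i j].
Definition addcf c x : config n := [ffun j => c j + x j].
Definition csum c := \sum_(i < n) c i.
Definition rts := clos_refl_trans (config n) (@topple_step n).

Lemma adj_irr i : fan_adj i i = false.
Proof. rewrite /fan_adj; apply/negbTE; rewrite negb_or; apply/andP; split; apply/eqP; lia. Qed.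

Lemma adj_sym i j : fan_adj i j = fan_adj j i.
Proof. by rewrite /fan_adj orbC. Qed.

Lemma sum_adj i : \sum_j (fan_adj i j : nat) = #|[pred j | fan_adj i j]|.
Proof.
rewrite -sum1_card [RHS]big_mkcond /=; apply: eq_bigr => j _; rewrite inE; by case: (fan_adj i j).
Qed.

Lemma csum_topple c i : fan_deg i <= c i -> (csum (topple c i)).+1 = csum c.
Proof.
move=> h; rewrite /csum (bigD1 i) //= [in RHS](bigD1 i) //= ffunE eqxx.
have E : \sum_(j < n | j != i) topple c i j =
   \sum_(j < n | j != i) c j + \sum_(j < n | j != i) (fan_adj i j : nat).
  rewrite -big_split /=; apply: eq_bigr => j /negbTE ji; by rewrite ffunE ji.
have E2 : \sum_(j < n | j != i) (fan_adj i j : nat) = #|[pred j | fan_adj i j]|.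
  by rewrite -sum_adj [in RHS](bigD1 i) //= adj_irr.
rewrite E E2; move: h; rewrite /fan_deg; set s := (\sum_(j < n | j != i) c j); set t := #|_|. lia.
Qed.

Lemma topple_stepE c c' : topple_step c c' <-> exists2 i, fan_deg i <= c i & c' = topple c i.
Proof. by split => [[i [h ->]]|[i h ->]]; exists i. Qed.

Lemma topple_comm c i j : i != j -> fan_deg i <= c i -> fan_deg j <= c j ->
  topple (topple c i) j = topple (topple c j) i.
Proof.
move=> ij hi hj; apply/ffunP => x; rewrite !ffunE.
have nji : (j == i) = false by rewrite eq_sym (negbTE ij).
case: (eqVneq x i) => [->|xi]; rewrite ?eqxx ?(negbTE ij) ?nji /=; first lia.
case: (eqVneq x j) => [->|xj]; rewrite ?eqxx ?nji ?(negbTE xi) ?(negbTE xj) /=; lia.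
Qed.

Lemma stab_ex a : exists b, stabilizes a b.
Proof.
move: {2}(csum a) (leqnn (csum a)) => m; elim: m a => [|m IH] a ha.
  case: (boolP [forall i, a i < fan_deg i]) => [/forallP st|].
    by exists a; split; [apply: rt_refl|].
  move/forallPn => [i]; rewrite -leqNgt => hi.
  have := csum_topple hi; lia.
case: (boolP [forall i, a i < fan_deg i]) => [/forallP st|].
  by exists a; split; [apply: rt_refl|].
move/forallPn => [i]; rewrite -leqNgt => hi.
have := csum_topple hi => hs.
have [b [hb sb]] := IH (topple a i) ltac:(lia).
exists b; split => //; apply: (rt_trans _ _ _ (topple a i)) hb.
by apply: rt_step; exists i.
Qed.

Lemma stab_uniq a b b' : rts a b -> stable b -> rts a b' -> stable b' -> b = b'.
Proof.
move=> h1 s1 h2 s2.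
move/clos_rt_rt1n_iff: h1 s1; move/clos_rt_rt1n_iff: h2 s2.
move: {2}(csum a) (leqnn (csum a)) => m; elim: m a b b' => [|m IH] a b b' ha h2 s2 h1 s1.
  case: h1 s1 => [|a1 x st1 _] s1.
    case: h2 s2 => [//|a2 y st2 _] s2; case/topple_stepE: st2 => i hi _.
    by have := s1 i; lia.
  case/topple_stepE: st1 => i hi _; have := csum_topple hi; lia.
case: h1 s1 => [|a1 x st1 r1] s1.
  case: h2 s2 => [//|a2 y st2 _] s2; case/topple_stepE: st2 => i hi _.
  by have := s1 i; lia.
case: h2 s2 => [|a2 y st2 r2] s2.
  case/topple_stepE: st1 => i hi _; by have := s2 i; lia.
case/topple_stepE: st1 => i hi E1; case/topple_stepE: st2 => j hj E2; subst a1 a2.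
have hsi := csum_topple hi; have hsj := csum_topple hj.
case: (eqVneq i j) => [eij|nij].
  subst; apply: (IH (topple a j) x y _ r2 s2 r1 s1); lia.
have hji : fan_deg j <= topple a i j by rewrite ffunE eq_sym (negbTE nij); lia.
have hij : fan_deg i <= topple a j i by rewrite ffunE (negbTE nij); lia.
have [e [he se]] := stab_ex (topple (topple a i) j).
move/clos_rt_rt1n_iff: he => he.
have e1 : x = e.
  apply: (IH (topple a i) x e _ _ se r1 s1); first lia.
  by eapply Relation_Operators.rt1n_trans; [exists j; split; [exact hji|reflexivity]|exact he].
have e2 : y = e.
  apply: (IH (topple a j) y e _ _ se r2 s2); first lia.
  rewrite topple_comm // in he.
  by eapply Relation_Operators.rt1n_trans; [exists i; split; [exact hij|reflexivity]|exact he].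
by rewrite e1 e2.
Qed.

Lemma topple_addcf c x i : fan_deg i <= c i -> topple (addcf c x) i = addcf (topple c i) x.
Proof. move=> h; apply/ffunP => j; rewrite !ffunE; case: (eqVneq j i) => [->|_]; lia. Qed.

Lemma rts_addcf a b x : rts a b -> rts (addcf a x) (addcf b x).
Proof.
elim => [c c' st|c|c1 c2 c3 _ h1 _ h2].
- case/topple_stepE: st => i hi ->; apply: rt_step; exists i; split.
    rewrite ffunE; lia.
  exact: (esym (topple_addcf x hi)).
- exact: rt_refl.
- exact: rt_trans h1 h2.
Qed.

Lemma stable_rts a b : stable a -> rts a b -> b = a.
Proof.
move=> sa h; apply: (stab_uniq h) => //; last exact: rt_refl.
move/clos_rt_rt1n_iff: h; case => // a1 y st _.
case/topple_stepE: st => i hi _; by have := sa i; lia.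
Qed.

End Sandpile.

Section Rec.
Variable n : nat.
Implicit Types (a b c d x : config n) (i j : 'I_n).

Definition cmax : config n := [ffun i => (fan_deg i).-1].
Definition beta : config n := [ffun _ => 1].

Lemma csum_eq0 x : csum x = 0 -> forall j, x j = 0.
Proof. move=> h j; apply/eqP; move/eqP: h; rewrite sum_nat_eq0 => /forallP /(_ j) //. Qed.

Lemma addcf0 d x : (forall j, x j = 0) -> addcf d x = d.
Proof. by move=> h; apply/ffunP => j; rewrite ffunE h addn0. Qed.

Lemma asm_reach_stable a b : stable a -> asm_reach a b -> stable b.
Proof.
move=> sa h; elim: h sa => [c c' [_ [i [_ s]]]|c|c1 c2 c3 _ h1 _ h2] // s1.
by apply: h2; apply: h1.
Qed.

Lemma reach_addcf x d b : stable d -> stabilizes (addcf d x) b -> asm_reach d b.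
Proof.
move: {2}(csum x) (leqnn (csum x)) => m; elim: m x d b => [|m IH] x d b hx sd [hb sb].
  have x0 : forall j, x j = 0 by apply: csum_eq0; lia.
  rewrite addcf0 // in hb; rewrite (stable_rts sd hb); exact: rt_refl.
case: (boolP [forall j, x j == 0]) => [/forallP x0|].
  rewrite addcf0 in hb; last by move=> j; apply/eqP.
  rewrite (stable_rts sd hb); exact: rt_refl.
move/forallPn => [i]; rewrite -lt0n => xi.
set x' : config n := [ffun j => x j - (j == i)].
have Ex : csum x = (csum x').+1.
  rewrite /csum (bigD1 i) //= [in RHS](bigD1 i) //= ffunE eqxx.
  have -> : \sum_(j < n | j != i) x' j = \sum_(j < n | j != i) x j.
    by apply: eq_bigr => j /negbTE ji; rewrite ffunE ji subn0.
  set S := (\sum_(j < n | j != i) x j); rewrite /=; lia.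
have Ed : addcf d x = addcf (add_grain d i) x'.
  apply/ffunP => j; rewrite !ffunE; case: (eqVneq j i) => [->|_] /=; lia.
have [d1 [h1 s1]] := stab_ex (add_grain d i).
have st : asm_step d d1 by split => //; exists i.
have [e [he se]] := stab_ex (addcf d1 x').
have hb' : rts (addcf d x) e.
  rewrite Ed; apply: rt_trans (rts_addcf x' h1) he.
have be : b = e := stab_uniq hb sb hb' se.
apply: (rt_trans _ _ _ d1); first exact: rt_step.
apply: (IH x' d1 b) => //; first lia.
by rewrite be.
Qed.

Lemma deg_pos i : 0 < fan_deg i.
Proof. by rewrite /fan_deg. Qed.

Lemma stable_cmax : stable cmax.
Proof. move=> i; rewrite ffunE; have := deg_pos i; lia. Qed.

Lemma reach_cmax c : stable c -> asm_reach c cmax.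
Proof.
move=> sc; apply: (reach_addcf (x := [ffun j => cmax j - c j])) => //.
have -> : addcf c [ffun j => cmax j - c j] = cmax.
  apply/ffunP => j; rewrite !ffunE; have := sc j; lia.
split; [exact: rt_refl|exact: stable_cmax].
Qed.

Lemma recurrentE c : asm_recurrent c <-> stable c /\ asm_reach cmax c.
Proof.
split => [[sc h]|[sc h]].
  by split => //; apply: h; apply: reach_cmax.
split => // c' hc'.
have sc' := asm_reach_stable sc hc'.
exact: rt_trans (reach_cmax sc') h.
Qed.

Definition degA (A : {set 'I_n}) v := #|[pred j | fan_adj v j && (j \in A)]|.
Definition noFSC c := forall A : {set 'I_n}, A != set0 ->
  exists2 v, v \in A & degA A v <= c v.

Lemma degA_split (A : {set 'I_n}) (v i : 'I_n) : i \in A -> degA A v = degA (A :\ i) v + fan_adj v i.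
Proof.
move=> iA; rewrite /degA (cardD1 i) [in RHS]addnC inE iA andbT; congr (_ + _).
apply: eq_card => j; rewrite !inE; by case: (j == i); rewrite ?andbF.
Qed.

Lemma degA_le (A : {set 'I_n}) (v : 'I_n) : degA A v <= (fan_deg v).-1.
Proof.
rewrite /degA /fan_deg /=; apply: subset_leq_card; apply/subsetP => j; rewrite !inE.
by case/andP.
Qed.

Lemma noFSC_mono c c' : (forall j, c j <= c' j) -> noFSC c -> noFSC c'.
Proof. move=> le h A /h [v vA hv]; exists v => //; exact: leq_trans hv (le v). Qed.

Lemma noFSC_topple c i : fan_deg i <= c i -> noFSC c -> noFSC (topple c i).
Proof.
move=> hi h A A0.
case: (boolP (i \in A)) => iA; last first.
  have [v vA hv] := h A A0; exists v => //; rewrite ffunE.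
  case: (eqVneq v i) => [vi|_]; first by move: iA; rewrite -vi vA.
  lia.
case: (eqVneq (A :\ i) set0) => [Ai|Ai].
  exists i => //; rewrite /degA; apply: leq_trans (leq0n _).
  rewrite leqn0; apply/eqP; apply: eq_card0 => j; rewrite !inE.
  case: (eqVneq j i) => [->|ji]; first by rewrite adj_irr.
  have : j \notin A :\ i by rewrite Ai inE.
  by rewrite !inE ji /= => /negbTE ->; rewrite andbF.
have [v] := h _ Ai; rewrite !inE => /andP [vi vA] hv.
exists v => //; rewrite ffunE (negbTE vi) (degA_split v iA) adj_sym; lia.
Qed.

Lemma noFSC_rts a b : rts a b -> noFSC a -> noFSC b.
Proof.
elim => [c c' st|c|c1 c2 c3 _ h1 _ h2] //.
  case/topple_stepE: st => i hi ->; exact: noFSC_topple.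
by move=> /h1 /h2.
Qed.

Lemma noFSC_reach a b : asm_reach a b -> noFSC a -> noFSC b.
Proof.
elim => [c c' [_ [i [h _]]]|c|c1 c2 c3 _ h1 _ h2] //.
  move=> hc; apply: noFSC_rts h _; apply: noFSC_mono hc => j; rewrite ffunE; lia.
by move=> /h1 /h2.
Qed.

Lemma noFSC_cmax : noFSC cmax.
Proof.
move=> A /set0Pn [v vA]; exists v => //; rewrite ffunE; exact: degA_le.
Qed.

Definition conf c (T : {set 'I_n}) : config n :=
  [ffun v => c v + 1 + degA T v - (if v \in T then fan_deg v else 0)].

Lemma burn c : noFSC c -> forall T : {set 'I_n},
  (forall u, u \in T -> fan_deg u <= c u + 1 + degA T u) -> rts (conf c T) c.
Proof.
move=> hc T; move: {2}#|~: T| (leqnn #|~: T|) => m; elim: m T => [|m IH] T hm hT.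
  have TT : T = setT.
    have : ~: T = set0 by apply/eqP; rewrite -cards_eq0; lia.
    by move/(congr1 (@setC _)); rewrite setCK setC0.
  have -> : conf c T = c.
    apply/ffunP => v; rewrite ffunE TT inE /degA /fan_deg.
    have -> : #|[pred j | fan_adj v j && (j \in [set: 'I_n])]| = #|[pred j | fan_adj v j]|.
      by apply: eq_card => j; rewrite !inE andbT.
    by rewrite -addnA addnK.
  exact: rt_refl.
case: (eqVneq (~: T) set0) => [T0|T0].
  apply: (IH T) => //; rewrite T0 cards0 //.
have [v] := hc _ T0; rewrite inE => vT hv.
have hdeg : fan_deg v = 1 + degA T v + degA (~: T) v.
  rewrite /fan_deg /degA -addnA; congr (_ + _).
  rewrite -(cardID (mem T) [pred j | fan_adj v j]); congr (_ + _); apply: eq_card => j.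
  rewrite !inE /=; by case: (fan_adj v j); case: (j \in T).
have Econf : topple (conf c T) v = conf c (v |: T).
  apply/ffunP => u; rewrite !ffunE !inE.
  case: (eqVneq u v) => [->|uv] /=.
    rewrite (negbTE vT) (degA_split v (setU11 v T)) setU1K // adj_irr; lia.
  rewrite adj_sym (degA_split u (setU11 v T)) setU1K //; case: (boolP (u \in T)) => uT; last lia.
  have := hT u uT; lia.
apply: (rt_trans _ _ _ (topple (conf c T) v)).
  apply: rt_step; exists v; split => //; rewrite ffunE (negbTE vT); lia.
rewrite Econf; apply: IH.
  have : #|~: (v |: T)| < #|~: T|.
    apply: proper_card; rewrite setCU; apply/properP; split; first exact: subsetIr.
    by exists v; rewrite !inE ?vT ?eqxx.
  lia.
move=> u; rewrite !inE => /orP [/eqP ->|uT].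
  rewrite (degA_split v (setU11 v T)) setU1K // adj_irr; lia.
rewrite (degA_split u (setU11 v T)) setU1K //; have := hT u uT; lia.
Qed.

Lemma burn_beta c : noFSC c -> rts (addcf c beta) c.
Proof.
move=> h; have := burn h (T := set0).
have -> : conf c set0 = addcf c beta.
  apply/ffunP => v; rewrite !ffunE inE /degA.
  have -> : #|[pred j | fan_adj v j && (j \in set0)]| = 0.
    by apply: eq_card0 => j; rewrite !inE andbF.
  lia.
apply => u; by rewrite inE.
Qed.

Lemma noFSC_recurrent c : (forall i, fan_deg i <= 3) -> stable c -> noFSC c -> asm_recurrent c.
Proof.
move=> h3 sc hc; apply/recurrentE; split => //.
apply: (reach_addcf (x := [ffun j => c j + 2 - cmax j])); first exact: stable_cmax.
split => //.
have -> : addcf cmax [ffun j => c j + 2 - cmax j] = addcf (addcf c beta) beta.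
  apply/ffunP => j; rewrite !ffunE; have := h3 j; lia.
apply: rt_trans (rts_addcf beta (burn_beta hc)) (burn_beta hc).
Qed.

Lemma recurrent_noFSC c : asm_recurrent c -> noFSC c.
Proof. move/recurrentE => [_ h]; exact: noFSC_reach h noFSC_cmax. Qed.

End Rec.

Definition Fb m k := \sum_(r < m.+1) 'C(m, r) * 'C(r + k, r).
Definition Tb m k := \sum_(r < m.+1) 'C(m, r) * 'C(r + k.+1, r.+1).

Lemma Fb0 k : Fb 0 k = 1.
Proof. by rewrite /Fb big_ord_recl big_ord0 /= bin0 bin0. Qed.

Lemma P1 m k : Fb m.+1 k = Fb m k + Tb m k.
Proof.
rewrite /Fb /Tb big_ord_recl /= bin0 add0n bin0.
have -> : \sum_(i < m.+1) 'C(m.+1, bump 0 i) * 'C(bump 0 i + k, bump 0 i) =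
   \sum_(i < m.+1) 'C(m, i.+1) * 'C(i.+1 + k, i.+1) + \sum_(i < m.+1) 'C(m, i) * 'C(i + k.+1, i.+1).
  rewrite -big_split /=; apply: eq_bigr => i _.
  rewrite /bump /= add1n binS mulnDl; congr (_ + _); by rewrite addnS addSn.
rewrite addnA; congr (_ + _).
rewrite [in RHS]big_ord_recl /= bin0 add0n bin0 mul1n; congr (_ + _).
rewrite big_ord_recr /= bin_small // mul0n addn0; apply: eq_bigr => i _.
by rewrite /bump /= add1n.
Qed.

Lemma P2 m k : Tb m k.+1 = Tb m k + Fb m k.+1.
Proof.
rewrite /Fb /Tb -big_split /=; apply: eq_bigr => i _.
by rewrite -mulnDr addnS binS.
Qed.

Lemma P0 m : Tb m 0 = Fb m 0.
Proof. rewrite /Fb /Tb; apply: eq_bigr => i _; by rewrite addn0 addn1 !binn. Qed.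

Lemma W1 M K a b c d e f : c = M -> d = K -> a = M.+1 -> b = K -> e = M -> f = K ->
  Fb a b = Fb c d + Tb e f.
Proof. by move=> -> -> -> -> -> ->; rewrite P1. Qed.
Lemma W2 a b : a = 0 -> Fb a b = 1.
Proof. by move=> ->; rewrite Fb0. Qed.
Lemma W3 M K a1 a2 a3 a4 a5 a6 a7 a8 : a5 = M -> a8 = K -> a1 = M.+1 -> a2 = K.+1 -> a3 = M -> a4 = K.+1 ->
  a6 = K.+1 -> a7 = M.+1 ->
  Tb a1 a2 = Fb a3 a4 + Tb a5 a6 + Tb a7 a8.
Proof. move=> -> -> -> -> -> -> -> ->; rewrite P2 P1; lia. Qed.
Lemma W4 M a1 a2 a3 a4 a5 a6 : a5 = M -> a1 = M.+1 -> a2 = 0 -> a3 = M -> a4 = 0 -> a6 = 0 ->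
  Tb a1 a2 = Fb a3 a4 + Tb a5 a6 + 0.
Proof. move=> -> -> -> -> -> ->; rewrite P0 P1; lia. Qed.
Lemma W5 K a1 a2 a7 a8 : a8 = K -> a1 = 0 -> a2 = K.+1 -> a7 = 0 ->
  Tb a1 a2 = 0 + 1 + Tb a7 a8.
Proof. move=> -> -> -> ->; rewrite P2 Fb0; lia. Qed.
Lemma W6 a b : a = 0 -> b = 0 -> Tb a b = 1.
Proof. by move=> -> ->; rewrite P0 Fb0. Qed.

Lemma W7 a b c d e f : a = 1 -> b = 0 -> c = 0 -> d = 0 -> e = 0 -> f = 0 ->
  Tb a b = Fb c d + Tb e f.
Proof. by move=> -> -> -> -> -> ->; rewrite P0 P1. Qed.

Definition Bf m s := if (m <= s) && (s < 2 * m) then Fb (2 * m - 1 - s) (s - m)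
                     else ((m == 0) && (s == 0) : nat).
Definition Ff m s := if (m - 1 <= s) && (s <= 2 * m - 2) then Tb (2 * m - 2 - s) (s + 1 - m)
                     else (s == 2 * m - 1 : nat).

Lemma Bf_in m s : m <= s < 2 * m -> Bf m s = Fb (2 * m - 1 - s) (s - m).
Proof. by rewrite /Bf => ->. Qed.
Lemma Bf_out m s : 0 < m -> ~~ (m <= s < 2 * m) -> Bf m s = 0.
Proof. rewrite /Bf => h /negbTE ->; lia. Qed.
Lemma Ff_in m s : m - 1 <= s <= 2 * m - 2 -> Ff m s = Tb (2 * m - 2 - s) (s + 1 - m).
Proof. by rewrite /Ff => ->. Qed.
Lemma Ff_top m s : 0 < m -> s = 2 * m - 1 -> Ff m s = 1.
Proof. rewrite /Ff => h ->; rewrite ifF; first by rewrite eqxx. lia. Qed.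
Lemma Ff_out m s : 0 < m -> (s < m - 1) || (2 * m - 1 < s) -> Ff m s = 0.
Proof. rewrite /Ff => h h'; rewrite ifF; lia. Qed.

Lemma LB0 m : 0 < m -> Bf m.+1 0 = 0.
Proof. move=> h; apply: Bf_out; lia. Qed.
Lemma LB1 m : 0 < m -> Bf m.+1 1 = Bf m 0.
Proof. move=> h; rewrite !Bf_out //; lia. Qed.
Lemma LB2 m s : 0 < m -> Bf m.+1 s.+2 = Bf m s.+1 + Ff m s.
Proof.
move=> h.
case: (ltnP s.+2 m.+1) => h1.
  rewrite !Bf_out ?Ff_out //; lia.
case: (ltnP s.+2 (2 * m.+1)) => h2; last first.
  rewrite !Bf_out ?Ff_out //; lia.
case: (ltnP s.+1 (2 * m)) => h3.
  rewrite !Bf_in ?Ff_in; try lia.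
  eapply W1; [reflexivity|reflexivity|lia..].
rewrite Bf_in; last lia.
rewrite Bf_out ?Ff_top //; try lia.
apply: W2; lia.
Qed.

Lemma LF0 m : 0 < m -> Ff m.+1 0 = Bf m 0.
Proof. move=> h; rewrite Ff_out ?Bf_out //; lia. Qed.
Lemma LF1 m : 0 < m -> Ff m.+1 1 = Bf m 1 + Ff m 0.
Proof.
move=> h; case: (eqVneq m 1) => [->|m1].
  rewrite Ff_in // Bf_in // Ff_in //; apply: W7; lia.
rewrite Ff_out ?Bf_out ?Ff_out //; lia.
Qed.

Lemma LF2 m s : 0 < m -> Ff m.+1 s.+2 = Bf m s.+2 + Ff m s.+1 + Ff m s.
Proof.
move=> h.
case: (ltnP s.+2 m) => h1.
  rewrite (@Ff_out m.+1 s.+2) ?(@Bf_out m s.+2) ?(@Ff_out m s.+1) ?(@Ff_out m s); lia.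
case: (ltnP (2 * m.+1 - 1) s.+2) => h2.
  rewrite (@Ff_out m.+1 s.+2) ?(@Bf_out m s.+2) ?(@Ff_out m s.+1) ?(@Ff_out m s); lia.
case: (eqVneq s.+2 (2 * m.+1 - 1)) => h3.
  rewrite (@Ff_top m.+1 s.+2) ?(@Bf_out m s.+2) ?(@Ff_out m s.+1) ?(@Ff_top m s); lia.
case: (eqVneq s.+2 m) => h4.
  rewrite Ff_in; last lia.
  rewrite Bf_in; last lia.
  rewrite Ff_in; last lia.
  rewrite Ff_out //; last lia.
  eapply W4; [reflexivity|lia..].
case: (eqVneq s.+2 (2 * m)) => h5.
  rewrite Ff_in; last lia.
  rewrite Bf_out //; last lia.
  rewrite Ff_top //; last lia.
  rewrite Ff_in; last lia.
  eapply W5; [reflexivity|lia..].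
rewrite Ff_in; last lia.
rewrite Bf_in; last lia.
rewrite Ff_in; last lia.
rewrite Ff_in; last lia.
eapply W3; [reflexivity|reflexivity|lia..].
Qed.

Fixpoint cnt (m st s : nat) : nat :=
  match m with
  | 0 => ((st != 2) && (s == 0) : nat)
  | m'.+1 => (if st == 0 then 0 else cnt m' 0 s)
             + (if s is s'.+1 then cnt m' (if st == 0 then 0 else 1) s' else 0)
             + (if s is s'.+2 then cnt m' 2 s' else 0)
  end.

Lemma cnt21 m s : 0 < m -> cnt m 2 s = cnt m 1 s.
Proof. by case: m. Qed.

Lemma cnt_closed m : 0 < m -> (forall s, cnt m 0 s = Bf m s) /\ (forall s, cnt m 1 s = Ff m s).
Proof.
elim: m => [//|m IH] _.
case: (posnP m) => [->|mp].
  split => s.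
    case: s => [|[|s]] /=.
    - by rewrite Bf_out.
    - by rewrite Bf_in // W2.
    - rewrite Bf_out //; lia.
  case: s => [|[|s]] /=.
  - by rewrite Ff_in // W6.
  - by rewrite Ff_top.
  - rewrite Ff_out //; lia.
have [IH0 IH1] := IH mp.
split => s.
  case: s => [|[|s]] /=.
  - by rewrite LB0.
  - rewrite LB1 // IH0; lia.
  - rewrite LB2 // IH0 cnt21 // IH1; lia.
case: s => [|[|s]] /=.
- rewrite LF0 // IH0; lia.
- rewrite LF1 // IH0 IH1; lia.
- rewrite LF2 // IH0 IH1 cnt21 // IH1; lia.
Qed.

Lemma final_count N k : 0 < N -> k <= N ->
  cnt N 0 (N + k) + cnt N 1 (N + k).-1 = Fb (N - k) k.
Proof.
move=> hN hk; have [C0 C1] := cnt_closed hN; rewrite C0 C1.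
case: (ltnP k N) => h.
  rewrite Bf_in; last lia.
  rewrite Ff_in; last lia.
  symmetry; eapply W1; [reflexivity|reflexivity|lia..].
rewrite Bf_out //; last lia.
rewrite Ff_top //; last lia.
rewrite W2 //; lia.
Qed.

Definition gposs (s : seq nat) := forall (i j : nat), i < j < size s ->
  nth 0 s i = 0 -> nth 0 s j = 0 -> exists k, i < k < j /\ nth 0 s k = 2.
Definition zc (s : seq nat) := forall j, j < size s -> nth 0 s j = 0 ->
  exists2 k, k < j & nth 0 s k = 2.
Definition lastok (s : seq nat) := last 0 s != 2.

Fixpoint acc (st : nat) (s : seq nat) : bool :=
  match s with
  | [::] => st != 2
  | x :: t => if x == 0 then (st != 0) && acc 0 t
              else if x == 2 then acc 2 t
              else acc (if st == 0 then 0 else 1) t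
  end.

Lemma gposs_cons x t : gposs (x :: t) <-> gposs t /\ (x = 0 -> zc t).
Proof.
split => [g|[g z]].
  split.
    move=> i j hij hi hj; have [k [hk1 hk2]] := g i.+1 j.+1 ltac:(simpl; lia) hi hj.
    case: k hk1 hk2 => [|k] hk1 hk2; first lia.
    exists k; split => //; lia.
  move=> x0 j hj hz; have [k [hk1 hk2]] := g 0 j.+1 ltac:(simpl; lia) x0 hz.
  case: k hk1 hk2 => [|k] hk1 hk2; first lia.
  exists k => //; lia.
move=> [|i] [|j] //= hij hi hj.
  have [k hk1 hk2] := z hi j ltac:(lia) hj.
  exists k.+1; split => //; lia.
have [k [hk1 hk2]] := g i j ltac:(simpl in hij; lia) hi hj.
exists k.+1; split => //; lia.
Qed.

Lemma zc_cons x t : zc (x :: t) <-> x <> 0 /\ (x = 2 \/ zc t).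
Proof.
split => [z|[x0 h]].
  have x0 : x <> 0.
    move=> e; have [k hk _] := z 0 isT e; lia.
  split => //.
  case: (eqVneq x 2) => [->|x2]; [by left|right].
  move=> j hj hz; have [[|k] hk hk2] := z j.+1 ltac:(simpl; lia) hz.
    by move: x2; rewrite -hk2 eqxx.
  exists k => //; lia.
case => [|j] //= hj hz.
case: h => [->|h]; first by exists 0.
have [k hk1 hk2] := h j ltac:(lia) hz.
exists k.+1 => //.
Qed.

Lemma lastok_cons x t : lastok (x :: t) = if t is [::] then x != 2 else lastok t.
Proof. by case: t. Qed.

Lemma acc2 t : acc 2 t = (t != [::]) && acc 1 t.
Proof. by case: t => [|x t] //=; case: (x == 0); case: (x == 2). Qed.

Lemma lastok_nil : lastok [::].
Proof. by []. Qed.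

Lemma acc_spec s : all (fun x => x < 3) s ->
  (acc 1 s <-> gposs s /\ lastok s) /\ (acc 0 s <-> zc s /\ gposs s /\ lastok s).
Proof.
elim: s => [|x t IH] /=.
  have g : gposs [::] by move=> i j /=; lia.
  have z : zc [::] by move=> j /=; lia.
  by split; split.
move=> /andP [hx ht]; have [[I1 I1'] [I0 I0']] := IH ht.
have lk : x != 2 -> lastok (x :: t) = lastok t.
  by move=> h; rewrite lastok_cons; case: t {IH ht I1 I1' I0 I0'}.
case: x hx lk => [|[|[|x]]] // _ lk; rewrite /=.
- have lk' := lk isT; rewrite lk' gposs_cons zc_cons.
  split; split.
  + by move/I0 => [z [g l]]; split; [split|].
  + by move=> [[g z] l]; apply: I0'; split; [apply: z|split].
  + by [].
  + by move=> [[]].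
- have lk' := lk isT; rewrite lk' gposs_cons zc_cons.
  split; split.
  + by move/I1 => [g l]; split; [split|].
  + by move=> [[g _] l]; apply: I1'.
  + by move/I0 => [z [g l]]; split; [split; [|right]|split].
  + by move=> [[_ [//|z]] [[g _] l]]; apply: I0'.
- rewrite acc2 gposs_cons zc_cons.
  case: t {IH ht lk} I1 I1' I0 I0' => [|y t] I1 I1' I0 I0'.
    by rewrite /lastok /=; split; split => //; intuition.
  split; split.
  + by case/andP => _ /I1 [g l]; split; [split|].
  + by move=> [[g _] l]; apply/andP; split; last apply: I1'.
  + by case/andP => _ /I1 [g l]; split; [split; [done|left]|split; [split|]].
  + by move=> [_ [[g _] l]]; apply/andP; split; last apply: I1'.
Qed.

Fixpoint W (n : nat) : seq (seq nat) :=
  if n is m.+1 then [seq 0 :: s | s <- W m] ++ [seq 1 :: s | s <- W m] ++ [seq 2 :: s | s <- W m]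
  else [:: [::]].

Lemma mem_cons_map (y x : nat) t (S : seq (seq nat)) :
  (x :: t \in [seq y :: s | s <- S]) = (x == y) && (t \in S).
Proof.
apply/mapP/andP => [[s sS [-> ->]]|[/eqP -> tS]]; first by split.
by exists t.
Qed.

Lemma memW n s : (s \in W n) = (size s == n) && all (fun x => x < 3) s.
Proof.
elim: n s => [|n IH] [|x t] //=.
  have h (y : nat) : ([::] \in [seq y :: s | s <- W n]) = false by apply/mapP => [[]].
  by rewrite !mem_cat !h.
rewrite !mem_cat !mem_cons_map IH eqSS.
case: x => [|[|[|x]]] //=; by rewrite ?orbF ?andbF.
Qed.

Lemma uniqW n : uniq (W n).
Proof.
elim: n => [//|n IH] /=.
have inj (y : nat) : injective (fun s : seq nat => y :: s) by move=> a b [].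
rewrite !cat_uniq !map_inj_uniq // IH /= andbT.
apply/andP; split.
  rewrite has_cat negb_or; apply/andP; split; apply/hasPn => s /mapP [t _ ->];
    rewrite mem_cons_map //.
apply/hasPn => s /mapP [t _ ->]; rewrite mem_cons_map //.
Qed.

Lemma countW n (Q : pred (seq nat)) : count Q (W n.+1) =
  count (fun s => Q (0 :: s)) (W n) + count (fun s => Q (1 :: s)) (W n)
  + count (fun s => Q (2 :: s)) (W n).
Proof. by rewrite /= !count_cat !count_map /= addnA. Qed.

Lemma count_cnt m st sg : count (fun s => acc st s && (sumn s == sg)) (W m) = cnt m st sg.
Proof.
elim: m st sg => [|m IH] st sg.
  by rewrite /= addn0 [0 == _]eq_sym.
rewrite countW /=; congr (_ + _ + _).
- case: st => [|st] /=.
    by rewrite (@eq_count _ _ pred0) ?count_pred0.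
  rewrite -IH; apply: eq_count => s /=; by rewrite add0n.
- case: sg => [|sg].
    by rewrite (@eq_count _ _ pred0) ?count_pred0 // => s /=; rewrite andbF.
  rewrite -IH; apply: eq_count => s /=; by rewrite add1n eqSS.
- case: sg => [|[|sg]].
  + by rewrite (@eq_count _ _ pred0) ?count_pred0 // => s /=; rewrite andbF.
  + by rewrite (@eq_count _ _ pred0) ?count_pred0 // => s /=; rewrite andbF.
  + rewrite -IH; apply: eq_count => s /=; by rewrite !addSn add0n !eqSS.
Qed.

Section Fan.
Variable N : nat.
Local Notation n := N.+1.
Implicit Types (c : config n) (i j v : 'I_n).

Lemma adjE v j : fan_adj v j =
  ((0 < v) && (j == inord v.-1)) || ((v.+1 < n) && (j == inord v.+1)).
Proof.
rewrite /fan_adj orbC; congr orb.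
  case: (posnP v) => [v0|vp] /=.
    by apply/negbTE/eqP; rewrite v0.
  rewrite -val_eqE /= inordK; last by have := ltn_ord v; lia.
  apply/eqP/eqP; lia.
case: (ltnP v.+1 n) => h /=.
  rewrite -val_eqE /= inordK //; apply/eqP/eqP; lia.
apply/negbTE/eqP; have := ltn_ord j; lia.
Qed.

Lemma card_adjP v (P : pred 'I_n) :
  #|[pred j | fan_adj v j && P j]| =
  ((0 < v) && P (inord v.-1)) + ((v.+1 < n) && P (inord v.+1)).
Proof.
set a : 'I_n := inord v.-1; set b : 'I_n := inord v.+1.
have E : [pred j | fan_adj v j && P j] =i
   [pred j | (((0 < v) && P a) && (j == a)) || (((v.+1 < n) && P b) && (j == b))].
  move=> j; rewrite !inE adjE -/a -/b.
  case: (eqVneq j a) => [->|ja].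
    case: (eqVneq a b) => [eab|ab].
      rewrite -eab !andbT; by case: (0 < v); case: (v.+1 < n); case: (P a).
    rewrite ?eqxx ?(negbTE ab) !andbT !andbF !orbF; by case: (0<v); case: (P a).
  rewrite ?(negbTE ja) !andbF /=.
  case: (eqVneq j b) => [->|jb]; rewrite ?eqxx ?andbT ?andbF //.
rewrite (eq_card E).
case h1: ((0 < v) && P a); case h2: ((v.+1 < n) && P b) => /=.
- have ab : a != b.
    have vn := ltn_ord v; move/andP: h1 => [h1 _]; move/andP: h2 => [h2 _].
    rewrite -val_eqE /= !inordK; try lia.
  rewrite (@eq_card _ _ (pred2 a b)); first by rewrite card2 ab.
  by move=> j; rewrite !inE.
- rewrite (@eq_card _ _ (pred1 a)); first by rewrite card1.
  by move=> j; rewrite !inE ?orbF.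
- rewrite (@eq_card _ _ (pred1 b)); first by rewrite card1.
  by move=> j; rewrite !inE.
- by apply: eq_card0 => j; rewrite !inE.
Qed.

Lemma degE v : fan_deg v = 1 + (0 < v) + (v.+1 < n).
Proof.
rewrite /fan_deg -addnA; congr (_ + _).
have := card_adjP v predT; rewrite /= !andbT => <-.
by apply: eq_card => j; rewrite !inE andbT.
Qed.

Lemma deg_le3 v : fan_deg v <= 3.
Proof. rewrite degE; case: (0 < v); case: (v.+1 < n) => //. Qed.

Lemma degAE (A : {set 'I_n}) v : degA A v =
  ((0 < v) && (inord v.-1 \in A)) + ((v.+1 < n) && (inord v.+1 \in A)).
Proof. exact: card_adjP. Qed.

Definition word c : seq nat := mkseq (fun m => c (inord m)) n.

Lemma nth_word c (m : nat) : m < n -> nth 0 (word c) m = c (inord m).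
Proof. move=> h; by rewrite nth_mkseq. Qed.

Lemma size_word c : size (word c) = n.
Proof. by rewrite size_mkseq. Qed.

Lemma stable_le2 c : stable c -> forall v, c v <= 2.
Proof. move=> s v; have := s v; have := deg_le3 v; lia. Qed.

Lemma noFSC_gposs c : stable c -> noFSC c -> gposs (word c).
Proof.
move=> sc h i j; rewrite size_word => /andP [ij jn]; rewrite !nth_word //; last lia.
move=> ci cj.
case: (boolP [exists k : 'I_n, (i < k < j) && (c k == 2)]).
  case/existsP => k /andP [/andP [h1 h2] /eqP h3]; exists k; split; first lia.
  by rewrite nth_word // inord_val.
rewrite negb_exists => /forallP hk.
pose A : {set 'I_n} := [set k : 'I_n | i <= k <= j].
have A0 : A != set0 by apply/set0Pn; exists (inord i); rewrite inE inordK; lia.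
have [v] := h A A0; rewrite inE => /andP [iv vj]; rewrite degAE.
have vn := ltn_ord v.
have e1 : (0 < v) && (inord v.-1 \in A) = (i < v) by rewrite inE inordK; lia.
have e2 : (v.+1 < n) && (inord v.+1 \in A) = (v < j).
  case: (ltnP v.+1 n) => hv; [rewrite inE inordK //; lia| rewrite /=; lia].
rewrite e1 e2 => hv.
have := hk v; have := stable_le2 sc v.
case: (eqVneq (nat_of_ord v) i) => [vi|vi].
  have : c v = 0 by rewrite (_ : v = inord i) //; apply/val_inj; rewrite /= inordK //; lia.
  lia.
case: (eqVneq (nat_of_ord v) j) => [vj'|vj'].
  have : c v = 0 by rewrite (_ : v = inord j) //; apply/val_inj; rewrite /= inordK //; lia.
  lia.
move=> h1 h2; exfalso; lia.
Qed.

Lemma gposs_noFSC c : stable c -> gposs (word c) -> noFSC c.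
Proof.
move=> sc g A A0.
case: (boolP [exists v in A, degA A v <= c v]) => [/existsP [v /andP [vA hv]]|]; first by exists v.
rewrite negb_exists_in => /forall_inP hA; exfalso.
have hlt : forall v, v \in A -> c v < degA A v by move=> v /hA; rewrite ltnNge.
have /set0Pn [v0 v0A] := A0.
case: (@arg_minnP _ v0 (mem A) val v0A) => i iA imin.
have ilt := hlt i iA; rewrite degAE in ilt.
have in_ := ltn_ord i.
have t1 : (0 < i) && (inord i.-1 \in A) = false.
  apply/negbTE/negP => /andP [i0 hA1]; have := imin _ hA1; rewrite /= inordK; lia.
rewrite t1 /= in ilt.
have i1 : (i.+1 < n) && (inord i.+1 \in A) by move: ilt; case: ((i.+1 < n) && _) => //.
move/andP: i1 => [i1n i1A].
have ci : c i = 0 by move: ilt; case: ((i.+1 < n) && _) => /=; lia.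
clear ilt t1 hA.
case: (@arg_maxnP _ i (mem A) val iA) => m mA mmax.
have mlt := hlt m mA; rewrite degAE in mlt.
have mn := ltn_ord m.
have t2 : (m.+1 < n) && (inord m.+1 \in A) = false.
  apply/negbTE/negP => /andP [m0 hA1]; have := mmax _ hA1; rewrite /= inordK; lia.
rewrite t2 addn0 in mlt.
have cm : c m = 0 by move: mlt; case: ((0 < m) && _) => /=; lia.
clear mlt t2.
have im : i < m by have := mmax _ i1A; rewrite /= inordK; lia.
pose Z := [pred u : 'I_n | (u \in A) && (i < u) && (c u == 0)].
have mZ : Z m by rewrite /Z /= cm eqxx andbT; apply/andP; split.
case: (@arg_minnP _ m Z val mZ) => j /andP [/andP [jA ij] /eqP cj] jmin.
have jn := ltn_ord j.
have claim : forall d, i + 1 + d <= j -> inord (i + 1 + d) \in A.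
  elim => [|d IH] hd; first by rewrite addn0 addn1.
  have lA := IH ltac:(lia).
  set l := i + 1 + d in lA hd *.
  have ln : l < n by lia.
  have cl : c (inord l) != 0.
    apply/eqP => cl0; have : Z (inord l) by rewrite /Z /= lA cl0 eqxx inordK //; lia.
    move/jmin; rewrite /= inordK //; lia.
  have := hlt _ lA; rewrite degAE inordK //.
  rewrite (_ : i + 1 + d.+1 = l.+1); last by rewrite /l; lia.
  move=> hl; suff : (l.+1 < n) && (inord l.+1 \in A) by case/andP.
  move: hl cl; case: ((l.+1 < n) && _) => //; case: ((0 < l) && _) => /=; lia.
have [k [/andP [ik kj] ck]] : exists k, i < k < j /\ nth 0 (word c) k = 2.
  apply: g; first by rewrite size_word; lia.
    by rewrite nth_word // inord_val.
  by rewrite nth_word // inord_val.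
rewrite nth_word in ck; last lia.
have kA : inord k \in A.
  have := claim (k - i - 1) ltac:(lia); rewrite (_ : i + 1 + (k - i - 1) = k) //; lia.
have := hlt _ kA; have := degA_le A (inord k); have := deg_le3 (inord k); lia.
Qed.

End Fan.

Lemma card_count (T : finType) (P : pred T) : #|[pred x | P x]| = count P (enum T).
Proof. rewrite enumT cardE /enum_mem size_filter; apply: eq_count => x; by rewrite !inE. Qed.

Section Final.
Variable N : nat.
Hypothesis hN : 0 < N.
Local Notation n := N.+1.

Lemma word_lt3 (d : {ffun 'I_n -> 'I_3}) : all (fun x => x < 3) (word (to_config d)).
Proof. apply/allP => x /mapP [i _ ->]; rewrite ffunE; exact: ltn_ord. Qed.

Lemma card_words (Q : pred (seq nat)) :
  #|[set d : {ffun 'I_n -> 'I_3} | Q (word (to_config d))]| = count Q (W n).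
Proof.
rewrite cardsE card_count.
rewrite -(count_map (fun d => word (to_config d)) Q).
apply/permP; apply: uniq_perm; last first.
- move=> s; rewrite memW; apply/mapP/andP => [[d _ ->]|[/eqP hs ha]].
    by rewrite size_word word_lt3.
  exists [ffun i : 'I_n => (inord (nth 0 s i) : 'I_3)]; first by rewrite mem_enum.
  apply: (@eq_from_nth _ 0); first by rewrite size_word hs.
  move=> i; rewrite hs => hi; rewrite nth_word // !ffunE /= (inordK hi) inordK //.
  have hi' : i < size s by rewrite hs.
  exact: (allP ha (nth 0 s i) (mem_nth 0 hi')).
- exact: uniqW.
- rewrite map_inj_uniq ?enum_uniq // => d1 d2 E.
  apply/ffunP => i; apply/val_inj.
  have := congr1 (fun s => nth 0 s i) E => /=; rewrite !nth_word // !ffunE inord_val //.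
Qed.

Lemma sum_word (c : config n) : \sum_(i < n) c i = sumn (word c).
Proof.
rewrite sumnE /word /mkseq big_map -[iota 0 n]/(index_iota 0 n) big_mkord.
by apply: eq_bigr => i _; rewrite inord_val.
Qed.

Lemma word_lt3c (c : config n) : (forall v, c v < 3) -> all (fun x => x < 3) (word c).
Proof. move=> h; apply/allP => x /mapP [i _ ->]; exact: h. Qed.

Lemma stableE (c : config n) : (forall v, c v < 3) ->
  stable c <-> (c (inord 0) <= 1 /\ c (inord N) <= 1).
Proof.
move=> h3; split => [s|[h0 hN']].
  have := s (inord 0); have := s (inord N); rewrite !degE !inordK //; lia.
move=> v; rewrite degE; have := h3 v; have vn := ltn_ord v.
case: (eqVneq (nat_of_ord v) 0) => [v0|v0].
  have -> : v = inord 0 by apply/val_inj; rewrite /= inordK.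
  rewrite inordK //; lia.
case: (eqVneq (nat_of_ord v) N) => [vN|vN].
  have -> : v = inord N by apply/val_inj; rewrite /= inordK.
  rewrite inordK //; lia.
lia.
Qed.

Definition Qw (k : nat) (s : seq nat) := (head 0 s <= 1) && acc 1 s && (sumn s == N + k).

Lemma recE (c : config n) : asm_recurrent c <-> stable c /\ gposs (word c).
Proof.
split => [r|[sc g]].
  have sc := r.1; split => //; apply: noFSC_gposs => //; exact: recurrent_noFSC.
apply: noFSC_recurrent => //; first exact: deg_le3.
exact: gposs_noFSC.
Qed.

Lemma charE k (c : config n) : (forall v, c v < 3) ->
  (asm_recurrent c /\ level c = (k%:Z)%R) <-> Qw k (word c).
Proof.
move=> h3; have [[A1 A1'] _] := acc_spec (word_lt3c h3).
have hd : head 0 (word c) = c (inord 0) by rewrite -nth0 nth_word.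
have hl : lastok (word c) = (c (inord N) != 2).
  by rewrite /lastok -nth_last size_word nth_word.
have lv : (level c = (k%:Z)%R) <-> sumn (word c) = N + k.
  rewrite /level sum_word /=; split => h; lia.
rewrite recE stableE // lv /Qw hd.
split => [[[[h0 hn'] g] sm]|/andP [/andP [h0 a] /eqP sm]].
  rewrite h0 sm eqxx andbT /=; apply: A1'; split => //; rewrite hl; lia.
have [g l] := A1 a; rewrite hl in l.
split => //; split => //; split => //; have := h3 (inord N); lia.
Qed.

End Final.

Lemma to_config_inj n : injective (@to_config n).
Proof.
move=> d1 d2 e; apply/ffunP => i; apply/val_inj.
by have := congr1 (fun f : config n => f i) e; rewrite !ffunE.
Qed.

Theorem mainTheorem17 (n k : nat) (hn : 2 <= n) (hk : k < n)
  (S : {set {ffun 'I_n -> 'I_3}}) :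
  (forall c : config n,
     (asm_recurrent c /\ level c = (k%:Z)%R) <->
     (exists2 d, d \in S & c = to_config d)) ->
  #|S| = \sum_(r < n - k) 'C(n - k - 1, r) * 'C(r + k, r).
Proof.
case: n hn hk S => [//|N] hn hk S hS.
have hN : 0 < N by lia.
rewrite (_ : N.+1 - k = (N - k).+1); last lia.
rewrite subSS subn0 -/(Fb (N - k) k).
have h3 : forall d : {ffun 'I_N.+1 -> 'I_3}, forall v, to_config d v < 3.
  by move=> d v; rewrite ffunE.
have E : #|S| = #|[set d : {ffun 'I_N.+1 -> 'I_3} | Qw N k (word (to_config d))]|.
  apply: eq_card => d; rewrite inE; apply/idP/idP => h.
    apply/(charE hN k (h3 d)); apply/hS; by exists d.
  have [d' d'S e] := (hS (to_config d)).1 ((charE hN k (h3 d)).2 h).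
  by rewrite (to_config_inj e).
rewrite E card_words countW.
rewrite (@eq_count _ (fun s => Qw N k (0 :: s)) (fun s => acc 0 s && (sumn s == N + k))); last first.
  by move=> s; rewrite /Qw /= add0n.
rewrite (@eq_count _ (fun s => Qw N k (1 :: s)) (fun s => acc 1 s && (sumn s == (N + k).-1))); last first.
  move=> s; rewrite /Qw /=; congr (_ && _); apply/eqP/eqP; lia.
rewrite (@eq_count _ (fun s => Qw N k (2 :: s)) pred0); last by move=> s; rewrite /Qw.
rewrite count_pred0 addn0 !count_cnt final_count //; lia.
Qed.
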